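(* Let $N_1,\dots,N_d$ be positive integers and $X\subseteq[N_1]\times\cdots\times[N_d]$. For any power of two $s$ with $1\le s\le\min_{1\le i\le d}N_i$, \[ f(s,X)\le5^d\frac{N_1\cdots N_d}{s^{d+1}}|X|. \]
   Context: $[N]=\{1,\dots,N\}$. For $\mathbf{b}\in\mathbb{Z}^d\setminus\{\mathbf{0}\}$, points $\mathbf{x},\mathbf{x}'$ are congruent mod $\mathbf{b}$ if $\mathbf{x}-\mathbf{x}'\in\mathbb{Z}\mathbf{b}$. For each $\mathbf{b}\ne\mathbf{0}$ and each congruence class $I$ of $X$ modulo $\mathbf{b}$, list $I=\{\mathbf{x}_1,\dots,\mathbf{x}_l\}$ in increasing order of $\mathbf{x}_u\cdot\mathbf{b}$. $\mathcal{C}_X$ is the collection, over all such $(\mathbf{b},I)$, of the sets $\{\mathbf{x}_u:(j-1)s'+1\le u\le js'\}$ with $s'=2^t$ ($t\ge0$) and $1\le j\le\lfloor l/s'\rfloor$. $f(s,X)$ is the number of sets of size $s$ in $\mathcal{C}_X$. *)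

(* Defs.v *)
From HB Require Import structures.
From mathcomp Require Import all_boot all_order all_algebra.
From mathcomp Require Import finmap.
From mathcomp Require Import boolp.
Set Implicit Arguments. Unset Strict Implicit. Unset Printing Implicit Defensive.
Import Order.TTheory GRing.Theory Num.Theory.
Local Open Scope fset_scope.
Local Open Scope ring_scope.

Definition point (d : nat) := {ffun 'I_d -> int}.

Definition dotz (d : nat) (x b : point d) : int := \sum_(i < d) x i * b i.

Definition congr_mod (d : nat) (b x x' : point d) : Prop :=
  exists k : int, forall i : 'I_d, x i - x' i = k * b i.

Definition cclass (d : nat) (X : {fset point d}) (b x : point d) : {fset point d} :=
  [fset y in X | `[< congr_mod b y x >]].

Definition sorted_class (d : nat) (b : point d) (I : {fset point d}) : seq (point d) :=
  sort (fun x y => dotz x b <= dotz y b) (enum_fset I).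

(* The block {x_u : (j-1)s'+1 <= u <= j s'} (1-indexed u, j). *)
Definition block (d : nat) (b : point d) (I : {fset point d}) (s' j : nat) : {fset point d} :=
  [fset x in take s' (drop ((j.-1) * s')%N (sorted_class b I))].

(* S belongs to the collection C_X: for some b <> 0, some congruence class
   I (the class of some x in X) of X modulo b, with l = |I|, some s' = 2^t
   and some 1 <= j <= floor(l/s'), S is the j-th block of s' consecutive
   elements of I ordered by x . b. *)
Definition in_CX (d : nat) (X : {fset point d}) (S : {fset point d}) : Prop :=
  exists (b x : point d) (t j : nat),
    [/\ exists i : 'I_d, b i != 0,
        x \in X,
        (1 <= j <= #|` cclass X b x| %/ 2 ^ t)%N
      & S = block b (cclass X b x) (2 ^ t) j].

Definition f_count (d : nat) (s : nat) (X : {fset point d}) : nat :=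
  #|` [fset S in fpowerset X | (#|` S| == s) && `[< in_CX X S >]] |.

(* Main.v *)
Require Import Defs.
From HB Require Import structures.
From mathcomp Require Import all_boot all_order all_algebra.
From mathcomp Require Import finmap boolp zify.
Import Order.TTheory GRing.Theory Num.Theory.
Local Open Scope fset_scope.
Local Open Scope ring_scope.
Set Implicit Arguments. Unset Strict Implicit. Unset Printing Implicit Defensive.

Section Aux.
Variable d : nat.
Implicit Types (b x y z : point d) (X I : {fset point d}).

Lemma congr_sym b x y : congr_mod b x y -> congr_mod b y x.
Proof. by case=> k hk; exists (- k) => i; rewrite mulNr -hk opprB. Qed.

Lemma congr_trans b x y z : congr_mod b x y -> congr_mod b y z -> congr_mod b x z.
Proof.
case=> k hk [k' hk']; exists (k + k') => i.
by rewrite mulrDl -hk -hk' addrA subrK.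
Qed.

Lemma in_cclass X b x y : (y \in cclass X b x) = (y \in X) && `[< congr_mod b y x >].
Proof. by rewrite /cclass in_fset /= inE. Qed.

Lemma cclass_eq X b x1 x2 y :
  y \in cclass X b x1 -> y \in cclass X b x2 -> cclass X b x1 = cclass X b x2.
Proof.
rewrite !in_cclass => /andP[_ /asboolP h1] /andP[_ /asboolP h2].
apply/fsetP => z; rewrite !in_cclass; case: (z \in X) => //=.
apply/asboolP/asboolP => h.
- apply: (congr_trans _ h2); apply: (congr_trans h); exact: congr_sym.
- apply: (congr_trans _ h1); apply: (congr_trans h); exact: congr_sym.
Qed.

Lemma sorted_class_uniq b I : uniq (sorted_class b I).
Proof. by rewrite sort_uniq fset_uniq. Qed.

Lemma sorted_class_size b I : size (sorted_class b I) = #|` I|.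
Proof. by rewrite size_sort. Qed.

Lemma mem_sorted_class b I y : (y \in sorted_class b I) = (y \in I).
Proof. by rewrite mem_sort. Qed.

Lemma in_block b I s' j y : (y \in block b I s' j) = (y \in take s' (drop (j.-1 * s') (sorted_class b I))).
Proof. by rewrite /block in_fset. Qed.

Lemma block_sub b I s' j : block b I s' j `<=` I.
Proof.
apply/fsubsetP => y; rewrite in_block => /mem_take /mem_drop.
by rewrite mem_sorted_class.
Qed.

Lemma block_card b I s' j : (j * s' <= #|` I|)%N -> (0 < j)%N -> #|` block b I s' j| = s'.
Proof.
move=> hj j0; rewrite /block card_fseq undup_id; last first.
  by apply: take_uniq; apply: drop_uniq; apply: sorted_class_uniq.
rewrite size_take size_drop sorted_class_size.
have -> : (#|` I| - j.-1 * s' = (#|` I| - j * s') + s')%N.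
  case: j hj j0 => // j hj _ /=; rewrite mulSn in hj *; move: hj; move: (j * s')%N => m; move: #|` I| => n; lia.
move: (#|` I| - j * s')%N => m; case: ltnP => //; lia.
Qed.

Lemma index_take_drop (T : eqType) (L : seq T) (y : T) m k :
  uniq L -> y \in take k (drop m L) -> (m <= index y L < m + k)%N.
Proof.
move=> uL yin.
have qlt := yin; rewrite -index_mem in qlt.
move: (nth_index y yin) qlt; move: (index y _) => q.
rewrite size_take_min size_drop => hy qlt.
have qk : (q < k)%N by move: qlt; move: (size L - m)%N => z; lia.
move: hy; rewrite nth_take // nth_drop => hy.
have hs : (m + q < size L)%N by move: qlt; move: (size L) => z; lia.
rewrite -hy index_uniq //; lia.
Qed.

Lemma block_uniq b I s j1 j2 y : (0 < s)%N ->
  y \in block b I s j1 -> y \in block b I s j2 -> block b I s j1 = block b I s j2.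
Proof.
move=> s0; rewrite !in_block => h1 h2.
have u := sorted_class_uniq b I.
have := index_take_drop u h1; have := index_take_drop u h2.
set i := index _ _ => /andP[a1 a2] /andP[b1 b2].
suff : j1.-1 = j2.-1 by rewrite /block => ->.
have e1 : (i %/ s = j1.-1)%N.
  apply/eqP; rewrite eqn_leq -ltnS ltn_divLR // leq_divRL // b1 andbT; lia.
have e2 : (i %/ s = j2.-1)%N.
  apply/eqP; rewrite eqn_leq -ltnS ltn_divLR // leq_divRL // a1 andbT; lia.
by rewrite -e1 -e2.
Qed.

End Aux.
Lemma sorted_spread (a : int) (K : seq int) : sorted <%R (a :: K) -> (size K)%:Z <= last a K - a.
Proof.
elim: K a => [|k K IH] a /=; first by rewrite subrr.
move=> /andP[ak pk]; have := IH k pk; lia.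
Qed.

Lemma spread_uniq (K : seq int) : uniq K -> (0 < size K)%N ->
  exists a c, [/\ a \in K, c \in K & ((size K).-1)%:Z <= c - a].
Proof.
move=> uK sK.
have : sorted <%R (sort <=%R K) by rewrite sort_lt_sorted.
have ps : perm_eq (sort <=%R K) K by rewrite perm_sort.
case E: (sort <=%R K) => [|a K'] //.
  by move: (perm_size ps); rewrite E /=; lia.
move=> /sorted_spread h; exists a, (last a K'); split.
- by rewrite -(perm_mem ps) E mem_head.
- by rewrite -(perm_mem ps) E mem_last.
- by move: (perm_size ps); rewrite E /= => <-.
Qed.

Lemma int_bound (s N : nat) (D B y1 y2 : int) :
  (s.-1)%:Z <= D -> D * B = y2 - y1 -> 1 <= y1 <= N%:Z -> 1 <= y2 <= N%:Z ->
  (s.-1 * `|B| <= N - 1)%N.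
Proof.
move=> h1 h2 h3 h4.
have: (s.-1)%:Z * `|B|%:Z <= (N - 1)%N%:Z.
  case: (lerP 0 B) => hB.
  - rewrite gez0_abs //; nia.
  - rewrite ltz0_abs //; nia.
rewrite -PoszM lez_nat. done.
Qed.

Lemma block_bound d (X : {fset point d}) (N : 'I_d -> nat) (b x : point d) t j i :
  (forall y : point d, y \in X -> forall i, 1 <= y i <= (N i)%:Z) ->
  (exists i0, b i0 != 0) ->
  (1 <= j <= #|` cclass X b x| %/ 2 ^ t)%N ->
  ((2 ^ t).-1 * `|b i| <= N i - 1)%N.
Proof.
move=> hX [i0 bi0] /andP[j1 jl].
set S := block b (cclass X b x) (2 ^ t) j.
have cS : #|` S| = (2 ^ t)%N.
  by apply: block_card => //; rewrite -leq_divRL // expn_gt0.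
have memS y : y \in S -> y \in X /\ congr_mod b y x.
  by move=> /(fsubsetP (block_sub _ _ _ _)); rewrite in_cclass => /andP[? /asboolP ?].
pose kf (y : point d) := ((y i0 - x i0) %/ b i0)%Z.
have kfP y : y \in S -> forall i, y i = x i + kf y * b i.
  move=> /memS [_ [k hk]] i'; have e : kf y = k by rewrite /kf hk mulzK.
  by rewrite e -hk addrC subrK.
have kinj : {in S &, injective kf}.
  by move=> y1 y2 h1 h2 e; apply/ffunP => i'; rewrite (kfP _ h1) (kfP _ h2) e.
pose K := map kf (enum_fset S).
have uK : uniq K by rewrite map_inj_in_uniq ?fset_uniq.
have sK : size K = (2 ^ t)%N by rewrite size_map -cS.
have [a [c [aK cK hac]]] : exists a c, [/\ a \in K, c \in K & ((size K).-1)%:Z <= c - a].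
  by apply: spread_uniq uK _; rewrite sK expn_gt0.
move/mapP: aK hac => [y1 y1S ->]; move/mapP: cK => [y2 y2S ->] hac.
apply: (@int_bound _ _ (kf y2 - kf y1) (b i) (y1 i) (y2 i)).
- by rewrite -sK.
- rewrite (kfP _ y2S) (kfP _ y1S) mulrBl; lia.
- exact: hX (memS _ y1S).1 i.
- exact: hX (memS _ y2S).1 i.
Qed.
Lemma double_count (T : choiceType) (X : {fset T}) (F : {fset {fset T}}) (s : nat) :
  (forall S, S \in F -> S `<=` X /\ #|` S| = s) ->
  (s * #|` F| = \sum_(y <- X) #|` [fset S in F | y \in S]|)%N.
Proof.
move=> hF.
under eq_bigr => y _ do rewrite card_fset_sum1 -big_fset_condE big_mkcond /=.
rewrite exchange_big /= card_fset_sum1 big_distrr /=.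
rewrite big_seq [in RHS]big_seq; apply: eq_bigr => S SF.
rewrite muln1 -big_mkcond /= big_fset_condE -card_fset_sum1.
have [sX cS] := hF S SF; rewrite -cS; congr (size (enum_fset _)).
apply/fsetP => y; rewrite in_fset /= inE andbC.
by case yS: (y \in S) => //=; rewrite (fsubsetP sX).
Qed.

Lemma fset_fin_card (T : finType) (A : {fset T}) : (#|` A| <= #|T|)%N.
Proof. by rewrite cardT; apply: uniq_leq_size; [exact: fset_uniq | move=> x; rewrite mem_enum]. Qed.

Lemma card_dffun_prod d (g : 'I_d -> nat) :
  #|{dffun forall i : 'I_d, 'I_(g i)}| = (\prod_(i < d) g i)%N.
Proof.
rewrite card_dep_ffun foldrE big_map big_enum /=.
by apply: eq_bigr => i _; rewrite card_ord.
Qed.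

Lemma coord_bound (s N : nat) : (2 <= s)%N -> (s <= N)%N ->
  (s * (2 * ((N - 1) %/ s.-1)).+1 <= 5 * N)%N.
Proof.
move=> s2 sN.
have : ((N - 1) %/ s.-1 * s.-1 <= N - 1)%N by rewrite -leq_divRL //; lia.
move: ((N - 1) %/ s.-1)%N => q; nia.
Qed.

Theorem corollary2p4 (d : nat) (N : 'I_d -> nat) (X : {fset point d}) (s : nat) :
  (forall i : 'I_d, (0 < N i)%N) ->
  (forall x : point d, x \in X -> forall i : 'I_d, 1 <= x i <= (N i)%:Z) ->
  (exists t : nat, s = (2 ^ t)%N) ->
  (1 <= s)%N ->
  (forall i : 'I_d, (s <= N i)%N) ->
  ((f_count s X)%:R : rat) <=
    (5 ^ d)%:R * (\prod_(i < d) N i)%:R / (s ^ d.+1)%:R * (#|` X|)%:R.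
Proof.
move=> N0 hX [t0 st] s1 sN.
rewrite /f_count.
set F := [fset S in fpowerset X | (#|` S| == s) && `[< in_CX X S >]].
have FP S : S \in F -> [/\ S `<=` X, #|` S| = s & in_CX X S].
  by rewrite /F in_fset /= inE fpowersetE => /andP[-> /andP[/eqP -> /asboolP]].
have key : (s ^ d.+1 * #|` F| <= 5 ^ d * (\prod_(i < d) N i) * #|` X|)%N.
  suff [C [hC1 hC2]] : exists C, (forall y, #|` [fset S in F | y \in S]| <= C)%N /\
                               (s ^ d * C <= 5 ^ d * \prod_(i < d) N i)%N.
    have hd := @double_count _ X F s (fun S h => let: And3 a b _ := FP S h in conj a b).
    have h1 : (s * #|` F| <= #|` X| * C)%N.
      rewrite hd card_fset_sum1 big_distrl /=; apply: leq_sum => y _; rewrite mul1n; exact: hC1.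
    apply: (@leq_trans (s ^ d * (#|` X| * C))).
      by rewrite expnS [(s * s ^ d)%N]mulnC -mulnA leq_mul2l h1 orbT.
    by rewrite mulnCA [(_ * #|` X|)%N]mulnC leq_mul2l hC2 orbT.
  case: (ltnP 1 s) => hs; last first.
    have s1' : s = 1%N by apply/eqP; rewrite eqn_leq hs s1.
    exists 1%N; split; last first.
      rewrite s1' exp1n mul1n muln_gt0 expn_gt0 /=; apply: prodn_gt0 => i; exact: N0.
    move=> y; rewrite -(cardfs1 [fset (y : point d)]); apply: fsubset_leq_card.
    apply/fsubsetP => S; rewrite in_fset /= inE => /andP[/FP[_ cS _] yS].
    move/eqP: cS; rewrite s1' => /cardfs1P[z Sz]; move: yS; rewrite Sz inE => /eqP ->.
    by rewrite inE.
  pose M i := ((N i - 1) %/ s.-1)%N.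
  exists #|{dffun forall i : 'I_d, 'I_(2 * M i).+1}|; split; last first.
    have cst (c : nat) : (c ^ d = \prod_(i < d) c)%N by rewrite prod_nat_const card_ord.
    rewrite card_dffun_prod (cst s) (cst 5) -!big_split /=.
    apply: leq_prod => i _; exact: coord_bound.
  move=> y.
  set A := [fset S in F | y \in S].
  pose bof S : point d := match pselect (in_CX X S) with left h => projT1 (cid h) | right _ => 0 end.
  have bofP S : in_CX X S -> exists x t j, [/\ exists i, bof S i != 0, x \in X,
       (1 <= j <= #|` cclass X (bof S) x| %/ 2 ^ t)%N &
       S = block (bof S) (cclass X (bof S) x) (2 ^ t) j].
    by move=> h; rewrite /bof; case: pselect => // h'; exact: projT2 (cid h').
  have s0 : (0 < s)%N by lia.
  have Fb S : S \in F -> exists x j, [/\ (1 <= j <= #|` cclass X (bof S) x| %/ s)%N,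
      S = block (bof S) (cclass X (bof S) x) s j & forall i, (`|bof S i| <= M i)%N].
    move=> SF; have [_ cS hS] := FP S SF.
    have [x [t [j [nz xX hj eS]]]] := bofP S hS.
    have e2 : (2 ^ t = s)%N.
      move: (hj) => /andP[j1 jl]; rewrite -cS eS block_card //.
      by rewrite -leq_divRL // expn_gt0.
    exists x, j; split => //; try by rewrite -e2.
    move=> i; rewrite /M leq_divRL; last by lia.
    by rewrite mulnC -e2; apply: block_bound hX nz hj.
  have inA S : S \in A -> S \in F /\ y \in S.
    by rewrite /A in_fset => /andP.
  have binj : {in A &, injective bof}.
    move=> S1 S2 /inA[h1 y1] /inA[h2 y2] e.
    have [x1 [j1 [_ e1 _]]] := Fb _ h1.
    have [x2 [j2 [_ e2 _]]] := Fb _ h2.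
    rewrite -e in e2.
    have yb1 : y \in block (bof S1) (cclass X (bof S1) x1) s j1 by rewrite -e1.
    have yb2 : y \in block (bof S1) (cclass X (bof S1) x2) s j2 by rewrite -e2.
    have yc1 := fsubsetP (block_sub _ _ _ _) _ yb1.
    have yc2 := fsubsetP (block_sub _ _ _ _) _ yb2.
    rewrite e1 e2; move: yb1 yb2; rewrite (cclass_eq yc1 yc2) => y1' y2'.
    exact: block_uniq s0 y1' y2'.
  pose kof S : {dffun forall i : 'I_d, 'I_(2 * M i).+1} :=
    [ffun i => inord (absz (bof S i + (M i)%:Z))].
  have kinj : {in A &, injective kof}.
    move=> S1 S2 h1 h2 e; apply: binj => //; apply/ffunP => i.
    have [f1 _] := inA _ h1; have [f2 _] := inA _ h2.
    have [x1 [j1 [_ _ bb1]]] := Fb _ f1.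
    have [x2 [j2 [_ _ bb2]]] := Fb _ f2.
    have := congr1 (fun f : {dffun forall i : 'I_d, 'I_(2 * M i).+1} => nat_of_ord (f i)) e; rewrite /= !ffunE /= !inordK.
    - move: (bb1 i) (bb2 i); move: (M i) (bof S1 i) (bof S2 i) => m u v; lia.
    - move: (bb2 i); move: (M i) (bof S2 i) => m v; lia.
    - move: (bb1 i); move: (M i) (bof S1 i) => m v; lia.
  have <- : #|` [fset kof S | S in A]| = #|` A| by rewrite card_in_imfset.
  exact: fset_fin_card.
rewrite mulrAC ler_pdivlMr ?ltr0n ?expn_gt0 ?s1 // -!natrM ler_nat.
by rewrite mulnC.
Qed.
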